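(* Let $K,L,A$ be as in the context and suppose the $\lambda_t$ and $\Psi_i$ form an $A$-scaffold on $L$ of tolerance $\mathfrak{T}\ge1$ with shift parameters $b_1,\dots,b_n$. Let $s\in\mathbb{S}_{p^n}$ and $t\in\mathbb{S}_{p^n}(h)$. Let $\Psi$ be any element of $\Upsilon^{(s)}$, and set $\Phi=\pi^{-w(s)}\Psi$. Then: (i) If $s\preceq\mathfrak{a}(t)$, then there is a unit $y_{\Phi,t}\in\mathfrak{O}_K^\times$ such that $$\Phi\cdot\lambda_t\equiv\pi^{\epsilon(s,t)}y_{\Phi,t}\lambda_{H(s,t)}\pmod{\pi^{\epsilon(s,t)}\lambda_{H(s,t)}\mathfrak{P}_L^{\mathfrak{T}}}.$$ In particular, $v_L(\Phi\cdot\lambda_t)=H(s,t)$ if $s\preceq\mathfrak{a}(t)$ and $\epsilon(s,t)=0$, and $v_L(\Phi\cdot\lambda_t)=H(s,t)+p^n$ if $s\preceq\mathfrak{a}(t)$ and $\epsilon(s,t)=1$. (ii) If $s\not\preceq\mathfrak{a}(t)$, then $v_L(\Phi\cdot\lambda_t)\ge H(s,b)+\mathfrak{T}+t-b$.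
   Context: Let $K$ be a field complete with respect to a discrete valuation, with residue field of characteristic $p>0$ (not necessarily perfect). Let $L/K$ be totally ramified of degree $p^n$; $v_K,v_L$ normalized valuations, $\mathfrak{O}_K$, $\mathfrak{P}_L$ as usual; $\pi$ a fixed uniformizer of $K$. Let $A$ be a $K$-algebra with $\dim_K A=p^n$ acting $K$-linearly on $L$. Let $\mathbb{S}_{p^n}=\{0,\dots,p^n-1\}$, $s=\sum_{i=1}^n s_{(n-i)}p^{n-i}$ with digits in $\{0,\dots,p-1\}$, $s\preceq t$ iff $s_{(n-i)}\le t_{(n-i)}$ for all $i$. Given integers $b_1,\dots,b_n$ prime to $p$, $\mathfrak{b}(s)=\sum_i s_{(n-i)}p^{n-i}b_i$; for $t\in\mathbb{Z}$, $\mathfrak{a}(t)\in\mathbb{S}_{p^n}$ is the unique element with $\mathfrak{b}(\mathfrak{a}(t))\equiv-t\pmod{p^n}$. An $A$-scaffold on $L$ of tolerance $\mathfrak{T}\ge1$ (possibly $\infty$) with shift parameters $b_1,\dots,b_n$ consists of: (i) $\lambda_t\in L$ ($t\in\mathbb{Z}$) with $v_L(\lambda_t)=t$ and $\lambda_{t_1}\lambda_{t_2}^{-1}\in K$ whenever $t_1\equiv t_2\pmod{p^n}$; (ii) $\Psi_1,\dots,\Psi_n\in A$ with $\Psi_i\cdot1=0$ such that for each $i,t$ there is $u_{i,t}\in\mathfrak{O}_K^\times$ with $\Psi_i\cdot\lambda_t\equiv u_{i,t}\lambda_{t+p^{n-i}b_i}$ if $\mathfrak{a}(t)_{(n-i)}\ge1$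 and $\equiv0$ if $\mathfrak{a}(t)_{(n-i)}=0$, modulo $\lambda_{t+p^{n-i}b_i}\mathfrak{P}_L^{\mathfrak{T}}$ (equalities if $\mathfrak{T}=\infty$). For $s\in\mathbb{S}_{p^n}$, $\Upsilon^{(s)}$ is the set of monomials (words) in the not necessarily commuting elements $\Psi_1,\dots,\Psi_n$ in which, for each $i$, the exponents of $\Psi_i$ sum to $s_{(n-i)}$. Fix $h\in\mathbb{Z}$, $\mathbb{S}_{p^n}(h)=\{t\in\mathbb{Z}:h\le t<h+p^n\}$, $b\in\mathbb{S}_{p^n}(h)$ the unique element with $\mathfrak{a}(b)=p^n-1$, $r:\mathbb{Z}\to\mathbb{S}_{p^n}$ reduction mod $p^n$. For $s\in\mathbb{S}_{p^n}$, $t\in\mathbb{S}_{p^n}(h)$: $D(s,t)=\lfloor(\mathfrak{b}(s)+t-h)/p^n\rfloor$, $H(s,t)=h+r(\mathfrak{b}(s)+t-h)$, $d(s)=D(s,b)$, $w(s)=\min\{d(u)-d(u-s):u\in\mathbb{S}_{p^n},u\succeq s\}$, and, when $s\preceq\mathfrak{a}(t)$, $\epsilon(s,t)=D(s,t)-w(s)$. *)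

(* Defs.v *)
From HB Require Import structures.
From mathcomp Require Import all_boot all_order all_algebra all_field.
Set Implicit Arguments. Unset Strict Implicit. Unset Printing Implicit Defensive.
Import Order.TTheory GRing.Theory Num.Theory.
Local Open Scope ring_scope.

Section Val.
Variables (K : fieldType) (L : fieldExtType K) (v : L -> int).

(* "v x >= m", with v 0 = +oo *)
Definition vge (x : L) (m : int) : Prop := x = 0 \/ m <= v x.

Definition is_normalized_dval : Prop :=
  [/\ forall x y : L, x != 0 -> y != 0 -> v (x * y) = v x + v y,
      forall x y : L, x != 0 -> y != 0 -> x + y != 0 ->
                      Num.min (v x) (v y) <= v (x + y)
    & forall m : int, exists x : L, x != 0 /\ v x = m].

Definition K_complete : Prop :=
  forall u : nat -> K,
    (forall M : int, exists N : nat, forall i j, (N <= i)%N -> (N <= j)%N ->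
        vge ((u i - u j)%:A) M) ->
    exists l : K, forall M : int, exists N : nat, forall i, (N <= i)%N ->
        vge ((u i - l)%:A) M.

Definition OK_unit (c : K) : Prop := c != 0 /\ v (c%:A) = 0.

(* x == y mod z * P_L^T ; T = None means T = infinity (equality) *)
Definition congT (T : option nat) (x y z : L) : Prop :=
  match T with
  | None => x = y
  | Some T => vge (x - y) (v z + T%:Z)
  end.

(* v_L(x) >= m + T  (with T = infinity meaning x = 0) *)
Definition vgeT (T : option nat) (x : L) (m : int) : Prop :=
  match T with
  | None => x = 0
  | Some T => vge x (m + T%:Z)
  end.
End Val.

Section Comb.
Variables (p n : nat) (b : nat -> int) (h : int).

Definition digit (s j : nat) : nat := (s %/ p ^ j) %% p.

Definition preceq (s t : nat) : bool :=
  all (fun j => digit s j <= digit t j)%N (iota 0 n).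

Definition bfrak (s : nat) : int :=
  \sum_(1 <= i < n.+1) ((digit s (n - i) * p ^ (n - i))%N%:Z * b i).

(* frak a (t): the (unique) s in S_{p^n} with frak b(s) = -t mod p^n
   (defined as the least such s) *)
Definition afrak (t : int) : nat :=
  find (fun s => ((p ^ n)%N%:Z %| bfrak s + t)%Z) (iota 0 (p ^ n)).

Definition bb : int :=
  h + (find (fun k => afrak (h + k%:Z) == (p ^ n).-1) (iota 0 (p ^ n)))%:Z.

Definition Dst (s : nat) (t : int) : int :=
  ((bfrak s + t - h) %/ (p ^ n)%N%:Z)%Z.

Definition Hst (s : nat) (t : int) : int :=
  h + ((bfrak s + t - h) %% (p ^ n)%N%:Z)%Z.

Definition dd (s : nat) : int := Dst s bb.

Definition ww (s : nat) : int :=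
  foldr Num.min (dd s - dd 0)
    [seq dd u - dd (u - s) | u <- iota 0 (p ^ n) & preceq s u].

Definition eps (s : nat) (t : int) : int := Dst s t - ww s.
End Comb.

Definition setting (p n : nat) (K : fieldType) (L : fieldExtType K)
  (v : L -> int) (pi : K) : Prop :=
  [/\ prime p, is_normalized_dval v, K_complete v & \dim {: L} = (p ^ n)%N] /\
  [/\ (* v_L(K^x) = p^n Z : totally ramified, v_K = v_L / p^n *)
      (forall c : K, c != 0 -> ((p ^ n)%N%:Z %| v (c%:A))%Z),
      pi != 0 /\ v (pi%:A) = (p ^ n)%N%:Z
    & (* residue characteristic p *)
      ((p%:R : K) = 0 \/ 0 < v ((p%:R : K)%:A))].

Definition is_action (p n : nat) (K : fieldType) (L : fieldExtType K)
  (A : falgType K) (act : A -> L -> L) : Prop :=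
  [/\ \dim {: A} = (p ^ n)%N,
      forall (k : K) (a c : A) (x : L), act (k *: a + c) x = k *: act a x + act c x,
      forall (a : A) (k : K) (x y : L), act a (k *: x + y) = k *: act a x + act a y,
      forall x : L, act 1 x = x
    & forall (a c : A) (x : L), act (a * c) x = act a (act c x)].

Definition scaffold (p n : nat) (K : fieldType) (L : fieldExtType K)
  (v : L -> int) (A : falgType K) (act : A -> L -> L) (T : option nat)
  (b : nat -> int) (lam : int -> L) (Psi : nat -> A) : Prop :=
  [/\
      (if T is Some T' then (1 <= T')%N else true),
      (forall i, (1 <= i <= n)%N -> coprime `|b i|%N p),
      (forall t, lam t != 0 /\ v (lam t) = t) &
   [/\ (forall t1 t2, (t1 == t2 %[mod (p ^ n)%N%:Z])%Z ->
          exists c : K, lam t1 / lam t2 = c%:A),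
      (forall i, (1 <= i <= n)%N -> act (Psi i) 1 = 0)
    & (forall i t, (1 <= i <= n)%N ->
        let t' := t + (p ^ (n - i))%N%:Z * b i in
        exists u : K, OK_unit v u /\
          congT v T (act (Psi i) (lam t))
            (if (1 <= digit p (afrak p n b t) (n - i))%N
             then u%:A * lam t' else 0)
            (lam t'))]].

(* Upsilon^(s): words in Psi_1..Psi_n (as index sequences) in which the
   exponents of Psi_i sum to s_(n-i) *)
Definition in_Upsilon (p n : nat) (s : nat) (word : seq nat) : bool :=
  all (fun i => (1 <= i <= n)%N) word &&
  all (fun i => count_mem i word == digit p s (n - i)) (iota 1 n).

Definition word_prod (K : fieldType) (A : falgType K) (Psi : nat -> A)
  (word : seq nat) : A := \prod_(i <- word) Psi i.

(* Main.v *)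
Require Import Defs.
From HB Require Import structures.
From mathcomp Require Import all_boot all_order all_algebra all_field.
From mathcomp Require Import zify ring lra.
Import Order.TTheory GRing.Theory Num.Theory.
Set Implicit Arguments. Unset Strict Implicit. Unset Printing Implicit Defensive.
Local Open Scope ring_scope.

Lemma int_dbl0 (a : int) : 0 = a + a -> a = 0. Proof. lia. Qed.

Section ValL.
Variables (K : fieldType) (L : fieldExtType K) (v : L -> int).
Hypothesis Hv : is_normalized_dval v.

Lemma vM x y : x != 0 -> y != 0 -> v (x * y) = v x + v y.
Proof. by move: Hv; rewrite /is_normalized_dval => -[h1 h2 _]; first [exact: h1 | exact: h2]. Qed.

Lemma vD x y : x != 0 -> y != 0 -> x + y != 0 -> Num.min (v x) (v y) <= v (x + y).
Proof. by move: Hv; rewrite /is_normalized_dval => -[h1 h2 _]; first [exact: h1 | exact: h2]. Qed.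

Lemma v1 : v 1 = 0.
Proof.
by have := vM (oner_neq0 L) (oner_neq0 L); rewrite mulr1 => /esym/eqP; rewrite -subr_eq0 addrK => /eqP ->.
Qed.

Lemma vN1 : v (-1) = 0.
Proof.
have h1 : (-1 : L) != 0 by rewrite oppr_eq0 oner_neq0.
have := vM h1 h1; rewrite mulrNN mulr1 v1; apply: int_dbl0.
Qed.

Lemma vN x : v (- x) = v x.
Proof.
have [->|x0] := eqVneq x 0; first by rewrite oppr0.
have h1 : (-1 : L) != 0 by rewrite oppr_eq0 oner_neq0.
by rewrite -mulN1r vM // vN1 add0r.
Qed.

Lemma vge0 M : vge v 0 M.
Proof. by left. Qed.

Lemma vgeN x M : vge v x M -> vge v (- x) M.
Proof. by case=> [->|h]; [left; rewrite oppr0 | right; rewrite vN]. Qed.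

Lemma vgeD x y M : vge v x M -> vge v y M -> vge v (x + y) M.
Proof.
case=> [->|hx]; first by rewrite add0r.
case=> [->|hy]; first by rewrite addr0; right.
have [x0|x0] := eqVneq x 0; first by rewrite x0 add0r; right.
have [y0|y0] := eqVneq y 0; first by rewrite y0 addr0; right.
have [s0|s0] := eqVneq (x + y) 0; first by left.
right; apply: le_trans (vD x0 y0 s0).
by rewrite le_min hx hy.
Qed.

Lemma vgeB x y M : vge v x M -> vge v y M -> vge v (x - y) M.
Proof. by move=> hx hy; apply: vgeD => //; apply: vgeN. Qed.

Lemma vge_le x M M' : M' <= M -> vge v x M -> vge v x M'.
Proof. by move=> hM [->|h]; [left | right; apply: le_trans h]. Qed.

Lemma vgeM x y M N : vge v x M -> vge v y N -> vge v (x * y) (M + N).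
Proof.
case=> [->|hx]; first by left; rewrite mul0r.
case=> [->|hy]; first by left; rewrite mulr0.
have [x0|x0] := eqVneq x 0; first by left; rewrite x0 mul0r.
have [y0|y0] := eqVneq y 0; first by left; rewrite y0 mulr0.
by right; rewrite vM // lerD.
Qed.

Lemma vge_self x : vge v x (v x).
Proof. by right. Qed.

Lemma vge_sum (I : Type) (r : seq I) (P : pred I) (F : I -> L) M :
  (forall i, P i -> vge v (F i) M) -> vge v (\sum_(i <- r | P i) F i) M.
Proof.
move=> hF; apply: (big_ind (fun z => vge v z M)); [exact: vge0 | | exact: hF].
by move=> x y; apply: vgeD.
Qed.

Lemma vge_all0 x : (forall M, vge v x M) -> x = 0.
Proof.
move=> h; case: (h (v x + 1)) => // hh.
move: hh; lia.
Qed.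

Lemma v_strict x y : x != 0 -> vge v y (v x + 1) -> x + y != 0 /\ v (x + y) = v x.
Proof.
move=> x0 [->|hy]; first by rewrite addr0.
have [y0|y0] := eqVneq y 0; first by rewrite y0 addr0.
have hlt : v x < v y by apply: lt_le_trans hy; rewrite ltrDl.
have s0 : x + y != 0.
  apply/negP => /eqP hs.
  have : y = - x by apply/eqP; rewrite -addr_eq0 addrC hs.
  by move=> hy'; move: hlt; rewrite hy' vN ltxx.
split => //.
have h1 := vD x0 y0 s0.
have h1' : v x <= v (x + y).
  by move: h1; rewrite ge_min => /orP[//|h2]; apply: le_trans h2; apply: ltW.
apply/eqP; rewrite eq_le h1' andbT.
have ny0 : - y != 0 by rewrite oppr_eq0.
have : (x + y) + - y != 0 by rewrite addrK.
move=> hh; have := vD s0 ny0 hh; rewrite addrK vN.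
rewrite ge_min => /orP[// | hyx]; by move: hlt; rewrite ltNge hyx.
Qed.


Lemma sum_distinct (N : nat) (y : 'I_N -> L) M :
  (forall i j, i != j -> y i != 0 -> y j != 0 -> v (y i) != v (y j)) ->
  vge v (\sum_i y i) M -> forall i, vge v (y i) M.
Proof.
move=> hd hs i.
have [yi0|yi0] := eqVneq (y i) 0; first by left.
case: (@arg_minP _ int _ i (fun j => y j != 0) (fun j => v (y j)) yi0) => k yk0 kmin.
have hrest : vge v (\sum_(j | j != k) y j) (v (y k) + 1).
  apply: vge_sum => j jk.
  have [yj0|yj0] := eqVneq (y j) 0; first by left.
  right; have h1 := kmin j yj0.
  have h2 : v (y j) != v (y k) by apply: hd.
  by move: h1 h2; lia.
have [s0 sv] := v_strict yk0 hrest.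
move: hs; rewrite (bigD1 k) //= => -[hs0|hsM].
  by move: s0; rewrite hs0 eqxx.
right; move: hsM; rewrite sv => hM.
by apply: le_trans hM _; apply: kmin.
Qed.

End ValL.
Lemma int_modeq (N : nat) (a b : int) (i j : nat) :
  (N%:Z %| a)%Z -> (N%:Z %| b)%Z -> a + i%:Z = b + j%:Z -> (i < N)%N -> (j < N)%N -> i = j.
Proof.
move=> /dvdzP[ka ->] /dvdzP[kb ->] e hi hj.
have e2 : ((ka - kb) * N%:Z = j%:Z - i%:Z) by rewrite mulrBl; lia.
move: (ka - kb) e2 => d e2.
have [d0|d0|d0] := ltrgtP d 0.
- have : (d + 1) * N%:Z <= 0 by apply: mulr_le0_ge0; lia.
  rewrite mulrDl mul1r; lia.
- have : 0 <= (d - 1) * N%:Z by apply: mulr_ge0; lia.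
  rewrite mulrBl mul1r; lia.
- by move: e2; rewrite d0 mul0r; lia.
Qed.

Section Basis.
Variables (K : fieldType) (L : fieldExtType K) (v : L -> int) (N : nat).
Variable lam : int -> L.
Hypothesis Hv : is_normalized_dval v.
Hypothesis HdivK : forall c : K, c != 0 -> (N%:Z %| v (c%:A))%Z.
Hypothesis Hlam : forall t, lam t != 0 /\ v (lam t) = t.
Hypothesis Hdim : \dim {: L} = N.

Lemma vscal_lam (c : K) (i : int) : c != 0 -> c *: lam i != 0 /\ v (c *: lam i) = v (c%:A) + i.
Proof.
move=> c0; have [l0 lv] := Hlam i.
have cA : c%:A != 0 :> L by rewrite scaler_eq0 negb_or c0 oner_neq0.
rewrite -[c *: lam i]mulr_algl; split; [rewrite mulf_eq0 negb_or cA l0 // | rewrite vM // lv; reflexivity].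
Qed.

Lemma distinct_terms (c : 'I_N -> K) (i j : 'I_N) :
  i != j -> c i *: lam (i : nat)%:Z != 0 -> c j *: lam (j : nat)%:Z != 0 ->
  v (c i *: lam (i : nat)%:Z) != v (c j *: lam (j : nat)%:Z).
Proof.
move=> ij hi hj.
have ci : c i != 0 by apply: contraNneq hi => ->; rewrite scale0r.
have cj : c j != 0 by apply: contraNneq hj => ->; rewrite scale0r.
have [_ ->] := vscal_lam (i : nat)%:Z ci; have [_ ->] := vscal_lam (j : nat)%:Z cj.
apply/negP => /eqP e; move: ij; rewrite -val_eqE /=.
by rewrite (int_modeq (HdivK ci) (HdivK cj) e) ?ltn_ord ?eqxx.
Qed.

Definition lamX := [tuple lam (i : nat)%:Z | i < N].

Lemma lamX_free : free lamX.
Proof.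
apply/freeP => k hk i.
have h : forall j : 'I_N, vge v (k j *: lam (j : nat)%:Z) (v (k j *: lam (j : nat)%:Z) + 1).
  move=> j; apply: (sum_distinct Hv (y := fun j => k j *: lam (j : nat)%:Z)).
    by move=> a b; apply: distinct_terms.
  by rewrite -[X in vge v X _](_ : \sum_(i < N) k i *: lamX`_i = _); [left | apply: eq_bigr => a _; rewrite nth_mktuple].
have [//|ki0] := eqVneq (k i) 0.
have [ne _] := vscal_lam (i : nat)%:Z ki0.
case: (h i) => [e|]; first by move: ne; rewrite e eqxx.
lia.
Qed.

Lemma decomp x : exists c : 'I_N -> K,
  x = \sum_(i < N) c i *: lam (i : nat)%:Z /\
  forall M, vge v x M -> forall i, vge v (c i *: lam (i : nat)%:Z) M.
Proof.
have hb : basis_of fullv lamX by rewrite basisEfree lamX_free subvf size_tuple Hdim leqnn.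
have xs : x \in <<lamX>>%VS by rewrite (span_basis hb) memvf.
have ex := @coord_span K L N lamX x xs.
exists (fun i => coord lamX i x).
have ex' : x = \sum_(i < N) coord lamX i x *: lam (i : nat)%:Z.
  by rewrite {1}ex; apply: eq_bigr => i _; rewrite nth_mktuple.
split => // M hM; apply: (sum_distinct Hv (y := fun j => coord lamX j x *: lam (j : nat)%:Z)).
  by move=> a b; apply: (distinct_terms (c := fun j => coord lamX j x)).
by rewrite -ex'.
Qed.

End Basis.

Section Digit.
Variable p : nat.
Hypothesis p1 : (1 < p)%N.

Lemma p0 : (0 < p)%N. Proof. exact: ltnW. Qed.

Lemma digit0 s : digit p s 0 = (s %% p)%N.
Proof. by rewrite /digit expn0 divn1. Qed.

Lemma digitS s j : digit p s j.+1 = digit p (s %/ p) j.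
Proof. by rewrite /digit expnS divnMA. Qed.

Lemma digit_lt s j : (digit p s j < p)%N.
Proof. by rewrite /digit ltn_pmod // p0. Qed.

Lemma digit_ge_pow s k : (0 < digit p s k)%N -> (p ^ k <= s)%N.
Proof.
move=> hd; rewrite leqNgt; apply/negP => h; move: hd.
by rewrite /digit divn_small // mod0n.
Qed.

Lemma natsub_aux a b r : (b <= a)%N -> (a - b + r = a + r - b)%N.
Proof. lia. Qed.

Lemma digit_sub k s j : (0 < digit p s k)%N ->
  digit p (s - p ^ k) j = (digit p s j - (j == k))%N.
Proof.
elim: k s j => [|k IH] s j hk.
  rewrite expn0; rewrite digit0 in hk.
  have es := divn_eq s p.
  have e1 : (s - 1 = s %/ p * p + (s %% p - 1))%N.
    by move: es hk; move: (s %/ p * p)%N (s %% p)%N => a r; lia.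
  have rl : (s %% p - 1 < p)%N.
    have : (s %% p < p)%N by rewrite ltn_mod p0.
    move: (s %% p)%N; lia.
  case: j => [|j].
    by rewrite !digit0 e1 modnMDl modn_small.
  by rewrite !digitS e1 divnMDl ?p0 // (divn_small rl) addn0 subn0.
rewrite digitS in hk.
have hq := digit_ge_pow hk.
have es := divn_eq s p.
have e1 : (s - p ^ k.+1 = (s %/ p - p ^ k) * p + s %% p)%N.
  rewrite mulnBl expnSr natsub_aux ?leq_mul2r ?hq ?orbT //.
  by rewrite -es.
have rl : (s %% p < p)%N by by rewrite ltn_mod p0.
case: j => [|j].
  by rewrite !digit0 e1 modnMDl modn_mod subn0.
by rewrite !digitS e1 divnMDl ?p0 // (divn_small rl) addn0 IH // eqSS.
Qed.

End Digit.

Definition gg (p : nat) (c : nat -> int) (m s : nat) : int :=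
  \sum_(j < m) ((digit p s j * p ^ j)%N%:Z * c j).

Section GG.
Variable p : nat.
Hypothesis p1 : (1 < p)%N.

Lemma gg_rec c m s : gg p c m.+1 s =
  (digit p s 0)%:Z * c 0%N + p%:Z * gg p (fun j => c j.+1) m (s %/ p).
Proof.
rewrite /gg big_ord_recl /= expn0 muln1; congr (_ + _).
rewrite mulr_sumr; apply: eq_bigr => j _; rewrite /= digitS expnS !PoszM.
have -> : bump 0 j = j.+1 by [].
ring.
Qed.

Lemma dvdz_nat (a b : nat) : (a%:Z %| b%:Z)%Z = (a %| b)%N.
Proof. by rewrite dvdzE. Qed.

Lemma gg_inj m : forall c s s', (forall j, (j < m)%N -> coprime `|c j| p) ->
  (s < p ^ m)%N -> (s' < p ^ m)%N ->
  ((p ^ m)%N%:Z %| gg p c m s - gg p c m s')%Z -> s = s'.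
Proof.
elim: m => [|m IH] c s s' hc hs hs' hd.
  by move: hs hs'; rewrite expn0 !ltnS !leqn0 => /eqP -> /eqP ->.
rewrite !gg_rec in hd.
set G := gg p _ m (s %/ p) in hd; set G' := gg p _ m (s' %/ p) in hd.
set d0 := digit p s 0 in hd; set d0' := digit p s' 0 in hd.
have e : (d0%:Z * c 0%N + p%:Z * G) - (d0'%:Z * c 0%N + p%:Z * G') =
   (d0%:Z - d0'%:Z) * c 0%N + p%:Z * (G - G') by ring.
rewrite e in hd.
have hpp : (p%:Z %| (p ^ m.+1)%N%:Z)%Z by rewrite dvdz_nat expnS dvdn_mulr.
have h1 : (p%:Z %| (d0%:Z - d0'%:Z) * c 0%N)%Z.
  have := dvdz_trans hpp hd => h.
  have -> : (d0%:Z - d0'%:Z) * c 0%N = (d0%:Z - d0'%:Z) * c 0%N + p%:Z * (G - G') - p%:Z * (G - G') by ring.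
  by apply: rpredB => //; apply: dvdz_mulr; exact: dvdzz.
rewrite Gauss_dvdzl in h1; last first.
  by rewrite coprimezE /= coprime_sym; apply: hc.
have ed : d0 = d0'.
  apply/esym; apply: (int_modeq (N := p) (a := d0%:Z - d0'%:Z) (b := 0) h1 (dvdz0 _)).
  - by rewrite subrK add0r.
  - exact: digit_lt.
  - exact: digit_lt.
rewrite ed subrr mul0r add0r expnS PoszM dvdz_mul2l in hd; last first.
  by rewrite eqz_nat -lt0n ltnW.
have eq2 : (s %/ p = s' %/ p)%N.
  apply: (IH (fun j => c j.+1)) => //.
  - by move=> j hj; apply: hc.
  - by rewrite ltn_divLR ?(ltnW p1) // -expnSr.
  - by rewrite ltn_divLR ?(ltnW p1) // -expnSr.
rewrite (div.divn_eq s p) (div.divn_eq s' p) eq2.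
by move: ed; rewrite /d0 /d0' !digit0 => ->.
Qed.

End GG.

Section Afrak.
Variables (p n : nat) (b : nat -> int).
Hypothesis p1 : (1 < p)%N.
Hypothesis hb : forall i, (1 <= i <= n)%N -> coprime `|b i| p.

Lemma bfrak_gg s : bfrak p n b s = gg p (fun j => b (n - j)%N) n s.
Proof.
rewrite /bfrak /gg big_add1 /= big_nat_rev /= big_mkord.
apply: eq_bigr => j _.
have hj := ltn_ord j.
have e1 : ((0 + n - j.+1).+1 = n - j)%N by lia.
have e2 : (n - (n - j) = j)%N by lia.
by rewrite e1 e2.
Qed.

Lemma gg_sub c m s k : (k < m)%N -> (0 < digit p s k)%N ->
  gg p c m (s - p ^ k) = gg p c m s - (p ^ k)%N%:Z * c k.
Proof.
move=> hk hd; rewrite /gg.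
have e : forall j : 'I_m, (digit p (s - p ^ k) j * p ^ j)%N%:Z * c j =
   (digit p s j * p ^ j)%N%:Z * c j - (if j == Ordinal hk then (p ^ k)%N%:Z * c k else 0).
  move=> j; rewrite digit_sub //.
  have [-> /=|hne] := eqVneq j (Ordinal hk).
    rewrite !eqxx mulnBl mul1n -subzn; last exact: leq_pmull.
    ring.
  have -> : (nat_of_ord j == k) = false.
    by apply/negP => /eqP hjk; move/eqP: hne; apply; apply: val_inj.
  by rewrite subn0 subr0.
rewrite (eq_bigr _ (fun j _ => e j)) sumrB -big_mkcond /=.
by rewrite big_pred1_eq.
Qed.

Lemma afrak_le t : (afrak p n b t <= p ^ n)%N.
Proof. by rewrite /afrak; have := find_size (fun s => ((p ^ n)%N%:Z %| bfrak p n b s + t)%Z) (iota 0 (p ^ n)); rewrite size_iota. Qed.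

Lemma digit_pown k : (k < n)%N -> digit p (p ^ n) k = 0%N.
Proof.
move=> hk; rewrite /digit -expnB ?(ltnW p1) ?(ltnW hk) //.
apply/eqP; change (p %| p ^ (n - k))%N; rewrite dvdn_exp ?dvdnn //; lia.
Qed.

Lemma afrak_lt t k : (k < n)%N -> (0 < digit p (afrak p n b t) k)%N ->
  (afrak p n b t < p ^ n)%N.
Proof.
move=> hk hd; rewrite ltn_neqAle afrak_le andbT; apply/negP => /eqP he.
by move: hd; rewrite he digit_pown.
Qed.

Lemma afrak_P t : (afrak p n b t < p ^ n)%N ->
  ((p ^ n)%N%:Z %| bfrak p n b (afrak p n b t) + t)%Z.
Proof.
rewrite /afrak => h.
have hh : has (fun s => ((p ^ n)%N%:Z %| bfrak p n b s + t)%Z) (iota 0 (p ^ n)).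
  by rewrite has_find size_iota.
have := nth_find 0%N hh; rewrite nth_iota //.
Qed.

Lemma afrak_eq t s : (s < p ^ n)%N -> ((p ^ n)%N%:Z %| bfrak p n b s + t)%Z ->
  afrak p n b t = s.
Proof.
move=> hs hP.
have hf : (afrak p n b t <= s)%N.
  rewrite leqNgt; apply/negP => h.
  by have := before_find 0%N h; rewrite nth_iota // hP.
have hlt : (afrak p n b t < p ^ n)%N by apply: leq_ltn_trans hs.
have hPf := afrak_P hlt.
apply: (gg_inj p1 (m := n) (c := fun j => b (n - j)%N)) => //.
  by move=> j hj; apply: hb; lia.
rewrite -!bfrak_gg.
have -> : bfrak p n b (afrak p n b t) - bfrak p n b s =
   (bfrak p n b (afrak p n b t) + t) - (bfrak p n b s + t) by ring.
exact: rpredB.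
Qed.

Lemma afrak_step t i : (1 <= i <= n)%N -> (0 < digit p (afrak p n b t) (n - i))%N ->
  afrak p n b (t + (p ^ (n - i))%N%:Z * b i) = (afrak p n b t - p ^ (n - i))%N.
Proof.
move=> hi hd.
have hk : (n - i < n)%N by lia.
have hlt := afrak_lt hk hd.
apply: afrak_eq; first by apply: leq_ltn_trans (leq_subr _ _) hlt.
rewrite bfrak_gg gg_sub // -bfrak_gg.
have -> : (n - (n - i))%N = i by lia.
have -> : bfrak p n b (afrak p n b t) - (p ^ (n - i))%N%:Z * b i +
    (t + (p ^ (n - i))%N%:Z * b i) = bfrak p n b (afrak p n b t) + t by ring.
exact: afrak_P.
Qed.

End Afrak.

Lemma ar_eTH (B t h q r : int) (N : int) :
  B + t - h = q * N + r -> t + B = h + r + q * N.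
Proof. move: (q * N) => X; lia. Qed.

Lemma ar_vc (a b c X : int) : a = c + b -> a = b + X -> c = X.
Proof. lia. Qed.

Lemma ar_vy (X y : int) : X = X + y -> y = 0.
Proof. lia. Qed.

Lemma ar_fin (B t h bb' W q r q0 N T' : int) :
  W <= q - q0 -> 0 <= q0 -> 0 <= (q - W) * N -> B + bb' - h = q * N + r ->
  h + r + t - bb' + T' <= t + B + (- W) * N + T'.
Proof. rewrite mulrBl mulNr; move: (q * N) (W * N) => X Y; lia. Qed.

Definition cl (K : fieldType) (L : fieldExtType K) (v : L -> int)
  (T : option nat) (x y : L) (m : int) : Prop :=
  match T with None => x = y | Some T => vge v (x - y) (m + T%:Z) end.

Section Act.
Variables (p n : nat) (K : fieldType) (L : fieldExtType K) (v : L -> int)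
  (A : falgType K) (act : A -> L -> L) (T : option nat) (b : nat -> int)
  (lam : int -> L) (Psi : nat -> A).
Hypothesis Hv : is_normalized_dval v.
Hypothesis Hact : is_action p n act.
Hypothesis HdivK : forall c : K, c != 0 -> ((p ^ n)%N%:Z %| v (c%:A))%Z.
Hypothesis Hlam : forall t, lam t != 0 /\ v (lam t) = t.
Hypothesis Hdim : \dim {: L} = (p ^ n)%N.
Hypothesis p1 : (1 < p)%N.
Hypothesis hb : forall i, (1 <= i <= n)%N -> coprime `|b i| p.
Hypothesis hT : if T is Some T' then (1 <= T')%N else true.
Hypothesis hscaff : forall i t, (1 <= i <= n)%N ->
        let t' := t + (p ^ (n - i))%N%:Z * b i in
        exists u : K, OK_unit v u /\
          congT v T (act (Psi i) (lam t))
            (if (1 <= digit p (afrak p n b t) (n - i))%N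
             then u%:A * lam t' else 0)
            (lam t').

Lemma actD a x y : act a (x + y) = act a x + act a y.
Proof. by move: Hact; rewrite /is_action => -[] _ _ H _ _; rewrite -{1}[x]scale1r H scale1r. Qed.

Lemma act0 a : act a 0 = 0.
Proof.
have := actD a 0 0; rewrite addr0 => /esym/eqP.
by rewrite -subr_eq0 addrK => /eqP ->.
Qed.

Lemma actZ a k x : act a (k *: x) = k *: act a x.
Proof. by move: Hact; rewrite /is_action => -[] _ _ H _ _; rewrite -[k *: x]addr0 H act0 addr0. Qed.

Lemma actN a x : act a (- x) = - act a x.
Proof. by rewrite -scaleN1r actZ scaleN1r. Qed.

Lemma actB a x y : act a (x - y) = act a x - act a y.
Proof. by rewrite actD actN. Qed.

Lemma actsum a (I : Type) (r : seq I) (P : pred I) (F : I -> L) :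
  act a (\sum_(i <- r | P i) F i) = \sum_(i <- r | P i) act a (F i).
Proof. by apply: (big_morph (act a)); [exact: actD | exact: act0]. Qed.

Lemma act0l x : act 0 x = 0.
Proof.
move: Hact; rewrite /is_action => -[] _ H _ _ _.
have := H 1 0 0 x; rewrite !scale1r addr0 => /esym/eqP.
by rewrite -subr_eq0 addrK => /eqP ->.
Qed.

Lemma actZl k a x : act (k *: a) x = k *: act a x.
Proof. by move: Hact; rewrite /is_action => -[] _ H _ _ _; rewrite -[k *: a]addr0 H act0l addr0. Qed.

Lemma actM a c x : act (a * c) x = act a (act c x).
Proof. by move: Hact; rewrite /is_action => -[]. Qed.

Lemma act1 x : act 1 x = x.
Proof. by move: Hact; rewrite /is_action => -[]. Qed.

Definition shift i : int := (p ^ (n - i))%N%:Z * b i.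

Definition Bw (w : seq nat) : int := \sum_(i <- w) shift i.

Lemma vA_unit (u : K) : OK_unit v u -> u%:A != 0 :> L /\ v (u%:A) = 0.
Proof. by case=> u0 vu; rewrite scaler_eq0 negb_or u0 oner_neq0. Qed.

Lemma psi_vge i t : (1 <= i <= n)%N -> vge v (act (Psi i) (lam t)) (t + shift i).
Proof.
move=> hi; have [u [uu hc]] := hscaff t hi.
have [l0 lv] := Hlam (t + shift i).
set Y := (if _ then _ else _) in hc.
have hY : vge v Y (t + shift i).
  rewrite /Y; case: ifP => _; last by left.
  have [uA vuA] := vA_unit uu.
  right; rewrite (vM Hv) // ?mulf_neq0 // vuA lv add0r; exact: lexx.
move: hc; rewrite /congT; case: T hT => [T' hT'|_] hc; last by rewrite hc.
have e : act (Psi i) (lam t) = Y + (act (Psi i) (lam t) - Y) by rewrite addrC subrK.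
rewrite e; apply: (vgeD Hv) => //.
apply: vge_le hc; rewrite lv /shift; lia.
Qed.

Lemma psi_shift i x M : (1 <= i <= n)%N -> vge v x M -> vge v (act (Psi i) x) (M + shift i).
Proof.
move=> hi hx.
have [c [ex hc]] := decomp Hv HdivK Hlam Hdim x.
rewrite ex actsum; apply: (vge_sum Hv) => k _.
have hk := hc M hx k.
have [c0|c0] := eqVneq (c k) 0; first by rewrite c0 scale0r act0; left.
have [ne vv] := vscal_lam Hv Hlam (k : nat)%:Z c0.
rewrite actZ -mulr_algl.
have hM : M <= v (c k)%:A + (k : nat)%:Z by case: hk => [e|]; [move: ne; rewrite e eqxx | rewrite vv].
have := vgeM Hv (vge_self v (c k)%:A) (psi_vge (k : nat)%:Z hi).
by apply: vge_le; move: hM; lia.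
Qed.

Definition okw (w : seq nat) := all (fun i => (1 <= i <= n)%N) w.

Lemma word_shift w x M : okw w -> vge v x M ->
  vge v (act (word_prod Psi w) x) (M + Bw w).
Proof.
elim: w x M => [|i w IH] x M.
  by rewrite /word_prod /Bw !big_nil act1 addr0.
rewrite /okw /= => /andP[hi hw] hx.
rewrite /word_prod /Bw !big_cons actM.
have := psi_shift hi (IH x M hw hx).
by rewrite /word_prod /Bw [shift i + _]addrC addrA.
Qed.

Lemma algM' (a c : K) : (a * c)%:A = a%:A * c%:A :> L.
Proof. by rewrite mulr_algl scalerA. Qed.

Lemma OK_unitM (a c : K) : OK_unit v a -> OK_unit v c -> OK_unit v (a * c).
Proof.
move=> ha hc; have [a0 va] := vA_unit ha; have [c0 vc] := vA_unit hc.
split; first by rewrite mulf_neq0 //; [case: ha | case: hc].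
by rewrite algM' (vM Hv) // va vc addr0.
Qed.

Lemma OK_unit1 : OK_unit v 1.
Proof. by split; [exact: oner_neq0 | rewrite scale1r (v1 Hv)]. Qed.

Lemma cl_refl x m : cl v T x x m.
Proof. by case: T => [T'|] //=; rewrite subrr; left. Qed.

Lemma cl_trans x y z m : cl v T x y m -> cl v T y z m -> cl v T x z m.
Proof.
case: T => [T'|] /=; last by move=> -> ->.
move=> h1 h2; have -> : x - z = (x - y) + (y - z) by rewrite addrA subrK.
exact: (vgeD Hv).
Qed.

Lemma cl_word w x y m : okw w -> cl v T x y m ->
  cl v T (act (word_prod Psi w) x) (act (word_prod Psi w) y) (m + Bw w).
Proof.
move=> hw; case: T => [T'|] /=; last by move=> ->.
move=> h; rewrite -actB.
have := word_shift hw h; apply: vge_le; lia.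
Qed.

Lemma cl_scal k x y m : cl v T x y m -> cl v T (k *: x) (k *: y) (m + v (k%:A)).
Proof.
have [->|k0] := eqVneq k 0; first by rewrite !scale0r => _; exact: cl_refl.
case: T => [T'|] /=; last by move=> ->.
move=> h; rewrite -scalerBr -[k *: (x - y)]mulr_algl.
have := vgeM Hv (vge_self v k%:A) h; apply: vge_le; lia.
Qed.

Lemma congT_cl x y z : congT v T x y z -> cl v T x y (v z).
Proof. by case: T. Qed.

Lemma cl_congT x y z : cl v T x y (v z) -> congT v T x y z.
Proof. by case: T. Qed.

Definition cond w a :=
  all (fun i => count_mem i w <= digit p a (n - i))%N (iota 1 n).

Lemma cond_nil a : cond [::] a.
Proof. by apply/allP. Qed.

Lemma cond_step w i a : (1 <= i <= n)%N -> (0 < digit p a (n - i))%N ->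
  cond (rcons w i) a = cond w (a - p ^ (n - i)).
Proof.
move=> hi hd; apply: eq_in_all => j; rewrite mem_iota => hj.
rewrite -cats1 count_cat /= digit_sub //.
have [eij|nij] := eqVneq i j.
  subst j; rewrite !eqxx; move: hd; move: (count_mem i w) (digit p a (n - i)) => c d.
  by move=> hd; apply/idP/idP => /= H; lia.
have -> : (n - j == n - i)%N = false by apply/eqP; lia.
by rewrite /= !addn0 subn0.
Qed.

Lemma cond_zero w i a : (1 <= i <= n)%N -> digit p a (n - i) = 0%N ->
  cond (rcons w i) a = false.
Proof.
move=> hi hd; apply/negP => /allP /(_ i).
rewrite mem_iota hd -cats1 count_cat /= eqxx; lia.
Qed.

Lemma main_ind w : okw w -> forall t,
  (cond w (afrak p n b t) -> exists u, OK_unit v u /\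
     cl v T (act (word_prod Psi w) (lam t)) (u *: lam (t + Bw w)) (t + Bw w)) /\
  (~~ cond w (afrak p n b t) -> cl v T (act (word_prod Psi w) (lam t)) 0 (t + Bw w)).
Proof.
elim/last_ind: w => [|w i IH] hw t.
  split => [_|]; last by rewrite cond_nil.
  exists 1; split; first exact: OK_unit1.
  by rewrite /word_prod /Bw !big_nil act1 scale1r addr0; exact: cl_refl.
move: hw; rewrite /okw all_rcons => /andP[hi hw].
have eW : word_prod Psi (rcons w i) = word_prod Psi w * Psi i by rewrite /word_prod big_rcons.
have eB : t + Bw (rcons w i) = (t + shift i) + Bw w.
  by rewrite /Bw big_rcons /=; ring.
rewrite eW eB actM.
have [u [uu hc]] := hscaff t hi.
have [l0 lv] := Hlam (t + (p ^ (n - i))%N%:Z * b i).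
move/congT_cl: hc; rewrite lv -/(shift i) => hc.
have [d0|dpos] := posnP (digit p (afrak p n b t) (n - i)).
  rewrite cond_zero //; split => // _.
  move: hc; rewrite d0 /= => hc.
  by have := cl_word hw hc; rewrite act0.
rewrite cond_step // -(afrak_step p1 hb hi dpos) -/(shift i).
move: hc; rewrite dpos /= mulr_algl => hc.
have hc2 := cl_word hw hc; rewrite actZ in hc2.
have [IH1 IH2] := IH hw (t + shift i).
have [uA vuA] := vA_unit uu.
split.
  move=> /IH1 [u' [uu' hc']].
  exists (u * u'); split; first exact: OK_unitM.
  apply: cl_trans hc2 _; rewrite -scalerA.
  by have := cl_scal u hc'; rewrite vuA addr0.
move=> /IH2 hc'.
apply: cl_trans hc2 _.
by have := cl_scal u hc'; rewrite vuA addr0 scaler0.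
Qed.

Lemma sum_count (f : nat -> int) w : okw w ->
  \sum_(i <- w) f i = \sum_(j <- iota 1 n) (count_mem j w)%:Z * f j.
Proof.
elim: w => [|i w IH].
  by move=> _; rewrite big_nil big1 // => j _; rewrite mul0r.
rewrite /okw /= => /andP[hi hw].
rewrite big_cons IH //.
have -> : \sum_(j <- iota 1 n) (count_mem j (i :: w))%:Z * f j =
  \sum_(j <- iota 1 n) ((i == j)%:Z * f j + (count_mem j w)%:Z * f j).
  by apply: eq_bigr => j _; rewrite /= PoszD mulrDl.
rewrite big_split /=; congr (_ + _).
have hin : i \in iota 1 n by rewrite mem_iota; lia.
rewrite (bigD1_seq i hin (iota_uniq 1 n)) /= eqxx mul1r big1 ?addr0 // => j hj.
by rewrite eq_sym (negbTE hj) mul0r.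
Qed.

Lemma Bw_bfrak s w : in_Upsilon p n s w -> Bw w = bfrak p n b s.
Proof.
move=> /andP[hw /allP hc].
rewrite /Bw (sum_count shift hw) /bfrak /index_iota subSS subn0.
apply: eq_big_seq => j hj; move: (hc j hj) => /eqP ->.
by rewrite /shift PoszM mulrA.
Qed.

Lemma cond_preceq s w a : in_Upsilon p n s w -> cond w a = preceq p n s a.
Proof.
move=> /andP[_ /allP hc].
rewrite /cond /preceq.
have -> : all (fun i => count_mem i w <= digit p a (n - i))%N (iota 1 n) =
          all (fun i => digit p s (n - i) <= digit p a (n - i))%N (iota 1 n).
  by apply: eq_in_all => j hj; move: (hc j hj) => /eqP ->.
apply/allP/allP => H j; rewrite mem_iota => hj.
  have := H (n - j)%N; rewrite mem_iota.
  have -> : (n - (n - j) = j)%N by lia.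
  by apply; lia.
by apply: H; rewrite mem_iota; lia.
Qed.

Lemma foldr_min_le (l : seq int) x0 : foldr Num.min x0 l <= x0.
Proof.
elim: l => [|a l IH] /=; first exact: lexx.
by rewrite ge_min IH orbT.
Qed.

Lemma bfrak0 : bfrak p n b 0 = 0.
Proof. by rewrite /bfrak big1 // => i _; rewrite /digit div0n mod0n mul0n mul0r. Qed.

Variable pi : K.
Hypothesis pi0 : pi != 0.
Hypothesis vpi : v (pi%:A) = (p ^ n)%N%:Z.

Lemma vinv (c : K) : c != 0 -> v ((c^-1)%:A) = - v (c%:A).
Proof.
move=> c0.
have ci0 : c^-1 != 0 by rewrite invr_eq0.
have a0 : c%:A != 0 :> L by rewrite scaler_eq0 negb_or c0 oner_neq0.
have ai0 : (c^-1)%:A != 0 :> L by rewrite scaler_eq0 negb_or ci0 oner_neq0.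
have := vM Hv ai0 a0; rewrite -algM' mulVf // scale1r (v1 Hv).
move=> e; apply/eqP; rewrite -addr_eq0 -e; reflexivity.
Qed.

Lemma vpin (k : nat) : v ((pi ^+ k)%:A) = k%:Z * (p ^ n)%N%:Z.
Proof.
elim: k => [|k IH]; first by rewrite expr0 scale1r (v1 Hv) mul0r.
have a0 : pi%:A != 0 :> L by rewrite scaler_eq0 negb_or pi0 oner_neq0.
have ak0 : (pi ^+ k)%:A != 0 :> L by rewrite scaler_eq0 negb_or expf_neq0 // oner_neq0.
rewrite exprS algM' (vM Hv) // IH vpi -[k.+1]addn1 PoszD mulrDl mul1r addrC.
reflexivity.
Qed.

Lemma vpiz (z : int) : v ((pi ^ z)%:A) = z * (p ^ n)%N%:Z.
Proof.
case: z => k; first by rewrite -exprnP vpin.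
rewrite NegzE -exprnN vinv ?expf_neq0 // vpin; ring.
Qed.

Lemma cl_val x y : cl v T x y (v y) -> y != 0 -> x != 0 /\ v x = v y.
Proof.
move=> hc y0; move: hc; case: T hT => [T' hT'|_] /=; last by move=> ->.
move=> hc.
have hc' : vge v (x - y) (v y + 1) by apply: vge_le hc; lia.
have := v_strict Hv y0 hc'; by rewrite addrC subrK.
Qed.

Hypothesis Hratio : forall t1 t2 : int, (t1 == t2 %[mod (p ^ n)%N%:Z])%Z ->
  exists c : K, lam t1 / lam t2 = c%:A.

Lemma final (h : int) (s : nat) (t : int) (word : seq nat) :
  in_Upsilon p n s word ->
  let Phi := (pi ^ (- ww p n b h s)) *: word_prod Psi word in
  let H := Hst p n b h s t in
  let e := eps p n b h s t in
  (preceq p n s (afrak p n b t) ->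
     (exists y : K, OK_unit v y /\
        congT v T (act Phi (lam t)) ((pi ^ e * y)%:A * lam H)
                                    ((pi ^ e)%:A * lam H)) /\
     (e = 0 -> act Phi (lam t) != 0 /\ v (act Phi (lam t)) = H) /\
     (e = 1 -> act Phi (lam t) != 0 /\ v (act Phi (lam t)) = H + (p ^ n)%N%:Z))
  /\
  (~~ preceq p n s (afrak p n b t) ->
     vgeT v T (act Phi (lam t))
       (Hst p n b h s (bb p n b h) + t - bb p n b h)).
Proof.
move=> hU Phi H e.
have hw : okw word by case/andP: hU.
have eB := Bw_bfrak hU.
have [M1 M2] := main_ind hw t.
rewrite eB in M1 M2.
have ePhi : act Phi (lam t) = pi ^ (- ww p n b h s) *: act (word_prod Psi word) (lam t).
  by rewrite /Phi actZl.
have vw := vpiz (- ww p n b h s).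
have Npos : (0 < (p ^ n)%N)%N by rewrite expn_gt0 (ltnW p1).
have Nz : (p ^ n)%N%:Z != 0 by rewrite eqz_nat -lt0n.
split.
  move=> hpre; rewrite -(cond_preceq _ hU) in hpre.
  have [u [uu hc]] := M1 hpre.
  set B := bfrak p n b s in hc.
  set D := Dst p n b h s t.
  have eTH : t + B = H + D * (p ^ n)%N%:Z.
    rewrite /H /Hst /D /Dst -/B.
    exact: ar_eTH (divz_eq (B + t - h) (p ^ n)%N%:Z).
  have hmod : (t + B == H %[mod (p ^ n)%N%:Z])%Z.
    rewrite eqz_mod_dvd eTH.
    have -> : H + D * (p ^ n)%N%:Z - H = D * (p ^ n)%N%:Z by ring.
    by apply: dvdz_mull; exact: dvdzz.
  have [c hcq] := Hratio hmod.
  have [lH0 lHv] := Hlam H.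
  have [lT0 lTv] := Hlam (t + B).
  have el : lam (t + B) = c%:A * lam H by rewrite -hcq divfK.
  have c0 : c != 0.
    by apply: contraNneq lT0 => c0; rewrite el c0 scale0r mul0r.
  have cA0 : c%:A != 0 :> L by rewrite scaler_eq0 negb_or c0 oner_neq0.
  have vc : v (c%:A) = D * (p ^ n)%N%:Z.
    have := vM Hv cA0 lH0; rewrite -el lTv lHv => e1.
    exact: ar_vc e1 eTH.
  have piD0 : pi ^ D != 0 by apply: expfz_neq0.
  set y := c / pi ^ D.
  have ec : c = pi ^ D * y by rewrite /y mulrC divfK.
  have y0 : y != 0 by rewrite /y mulf_neq0 // invr_eq0.
  have yA0 : y%:A != 0 :> L by rewrite scaler_eq0 negb_or y0 oner_neq0.
  have piDA0 : (pi ^ D)%:A != 0 :> L by rewrite scaler_eq0 negb_or piD0 oner_neq0.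
  have vy : v (y%:A) = 0.
    have := vM Hv piDA0 yA0; rewrite -algM' -ec vc vpiz.
    exact: ar_vy.
  have uy : OK_unit v (u * y) by apply: OK_unitM => //; split.
  have [uyA0 vuyA] := vA_unit uy.
  have pieA0 : (pi ^ e)%:A != 0 :> L by rewrite scaler_eq0 negb_or expfz_neq0 // oner_neq0.
  set Y := (pi ^ e * (u * y))%:A * lam H.
  set Z := (pi ^ e)%:A * lam H.
  have eY : pi ^ (- ww p n b h s) *: (u *: lam (t + B)) = Y.
    rewrite el !scalerAl !scalerA /Y.
    congr ((_ *: 1) * _).
    rewrite /e /eps -/D addrC expfzDr // ec; ring.
  have vZ : v Z = t + B + v ((pi ^ (- ww p n b h s))%:A).
    rewrite /Z (vM Hv) // vpiz vw lHv /e /eps -/D eTH; ring.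
  have vYZ : v Y = v Z.
    rewrite /Y /Z algM' !(vM Hv) ?mulf_neq0 // vuyA addr0; reflexivity.
  have hcl : cl v T (act Phi (lam t)) Y (v Z).
    by rewrite ePhi -eY vZ; exact: cl_scal.
  have Y0 : Y != 0 by rewrite /Y mulf_neq0 // algM' mulf_neq0.
  have hcl' : cl v T (act Phi (lam t)) Y (v Y) by rewrite vYZ.
  have [X0 vX] := cl_val hcl' Y0.
  split.
    by exists (u * y); split => //; apply: cl_congT.
  have vZe : v Z = e * (p ^ n)%N%:Z + H by rewrite /Z (vM Hv) // vpiz lHv.
  split => he; split => //; rewrite vX vYZ vZe he; ring.
move=> hnp; rewrite -(cond_preceq _ hU) in hnp.
have hc := cl_scal (pi ^ (- ww p n b h s)) (M2 hnp).
rewrite scaler0 -ePhi vw in hc.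
move: hc; rewrite /vgeT; case: T hT => [T' _|_] /=; last by [].
rewrite subr0; apply: vge_le.
set B := bfrak p n b s.
have hww : ww p n b h s <= dd p n b h s - dd p n b h 0 by rewrite /ww foldr_min_le.
have hd0 : 0 <= dd p n b h 0.
  rewrite /dd /Dst bfrak0 add0r /bb addrAC subrr add0r divz_ge0 //.
have hm : 0 <= (dd p n b h s - ww p n b h s) * (p ^ n)%N%:Z.
  by apply: mulr_ge0; [rewrite subr_ge0; apply: le_trans hww _; rewrite lerBlDr lerDl | ].
exact: ar_fin hww hd0 hm (divz_eq _ _).
Qed.
End Act.

Unset Implicit Arguments.

Theorem proposition3p10 (p n : nat) (K : fieldType) (L : fieldExtType K)
  (v : L -> int) (pi : K) (A : falgType K) (act : A -> L -> L)
  (T : option nat) (b : nat -> int) (lam : int -> L) (Psi : nat -> A)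
  (h : int) (s : nat) (t : int) (word : seq nat) :
  setting p n v pi ->
  is_action p n act ->
  scaffold p n v act T b lam Psi ->
  (s < p ^ n)%N ->
  h <= t < h + (p ^ n)%N%:Z ->
  in_Upsilon p n s word ->
  let Phi := (pi ^ (- ww p n b h s)) *: word_prod Psi word in
  let H := Hst p n b h s t in
  let e := eps p n b h s t in
  (preceq p n s (afrak p n b t) ->
     (exists y : K, OK_unit v y /\
        congT v T (act Phi (lam t)) ((pi ^ e * y)%:A * lam H)
                                    ((pi ^ e)%:A * lam H)) /\
     (e = 0 -> act Phi (lam t) != 0 /\ v (act Phi (lam t)) = H) /\
     (e = 1 -> act Phi (lam t) != 0 /\ v (act Phi (lam t)) = H + (p ^ n)%N%:Z))
  /\
  (~~ preceq p n s (afrak p n b t) ->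
     vgeT v T (act Phi (lam t))
       (Hst p n b h s (bb p n b h) + t - bb p n b h)).
Proof.
move=> hset Hact hsc hs ht hU.
move: hset hsc; rewrite /setting /scaffold.
move=> -[[pr Hv _ Hdim] [HdivK [pi0 vpi] _]] [hT hb Hlam [Hratio _ hscaff]].
have hT' : (match T with Some T' => (1 <= T')%N | None => true end) = true by case: T hT {hscaff}.
have X := (final Hv Hact HdivK Hlam Hdim (prime_gt1 pr) hb hT' hscaff pi0 vpi Hratio h (s:=s) (word:=word) t hU). exact X.
Qed.
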